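(* For every $0<\gamma<\frac12$, the function $m\mapsto F(m,\gamma)$ is strictly convex on the real interval $[2,\infty)$.
   Context: Logarithms base 2. For real $m\ge 2$ and $\gamma\in(0,\frac12)$, $$F(m,\gamma)=\min_{x\in(0,1)}\Big[\log\big((1+x)^m+(1-x)^m\big)-m\gamma\log x-1\Big].$$ *)

(* Defs.v *)
From Stdlib Require Import Reals Lra ClassicalEpsilon.
Open Scope R_scope.

Definition log2 (x : R) : R := ln x / ln 2.

Definition Fobj (m g x : R) : R :=
  log2 (Rpower (1 + x) m + Rpower (1 - x) m) - m * g * log2 x - 1.

Definition is_min_value (m g v : R) : Prop :=
  (exists x, 0 < x < 1 /\ Fobj m g x = v) /\
  (forall x, 0 < x < 1 -> v <= Fobj m g x).

(* F(m,gamma) = min_{x in (0,1)} Fobj m gamma x  (chosen by epsilon;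
   when the minimum exists it is this unique value). *)
Definition F (m g : R) : R :=
  epsilon (inhabits 0) (fun v => is_min_value m g v).

Definition strictly_convex_on (P : R -> Prop) (f : R -> R) : Prop :=
  forall a b t, P a -> P b -> a <> b -> 0 < t < 1 ->
    f (t * a + (1 - t) * b) < t * f a + (1 - t) * f b.

(* Main.v *)
Require Import Defs.
From Stdlib Require Import Reals Lra ClassicalEpsilon.
From Coquelicot Require Import Coquelicot.
Open Scope R_scope.
Definition Af (g u : R) : R :=
  (ln 2 - ln (1 + exp (- u)) - g * (ln (1 - exp (- u)) - ln (1 + exp (-u)))) / ln 2.
Definition Bf (w : R) : R := ln (1 + exp (- w)) / ln 2.
Definition dA (g u : R) : R :=
  let t := exp (- u) in (t / (1 + t) - 2 * g * t / (1 - t * t)) / ln 2.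
Definition dB (w : R) : R := let t := exp (- w) in - (t / (1 + t)) / ln 2.
Lemma ln2_pos : 0 < ln 2.
Proof. rewrite <- ln_1; apply ln_increasing; lra. Qed.
Lemma dA_ok g u : 0 < u -> is_derive (Af g) u (dA g u).
Proof.
  intro hu. assert (ht: exp (-u) < 1). { rewrite <- exp_0. apply exp_increasing; lra. }
  assert (ht0 := exp_pos (-u)). pose proof ln2_pos.
  unfold Af, dA. auto_derive.
  - repeat split; lra.
  - field. repeat split; nra.
Qed.
Lemma dB_ok w : is_derive Bf w (dB w).
Proof.
  assert (ht0 := exp_pos (-w)). pose proof ln2_pos.
  unfold Bf, dB. auto_derive.
  - lra.
  - field. lra.
Qed.
Definition Gf (m g u : R) : R := m * Af g u + Bf (m * u) - 1.
Definition dG (m g u : R) : R := m * dA g u + m * dB (m * u).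
Lemma dG_ok m g u : 0 < u -> is_derive (Gf m g) u (dG m g u).
Proof.
  intro hu.
  assert (H1 := dA_ok g u hu). assert (H2 := dB_ok (m*u)).
  assert (H3: is_derive (fun u => m*u) u m) by (auto_derive; [exact I | ring]).
  pose proof (is_derive_comp Bf (fun u => m*u) u _ _ H2 H3) as H4.
  pose proof (is_derive_scal (Af g) u m _ H1) as H5.
  pose proof (is_derive_plus _ _ u _ _ H5 H4) as H6.
  pose proof (is_derive_minus _ (fun _ => 1) u _ 0 H6 (is_derive_const 1 u)) as H7.
  unfold Gf, dG.
  replace (m*dA g u + m*dB (m*u)) with (minus (plus (m * dA g u) (scal m (dB (m * u)))) 0).
  2: { unfold minus, plus, opp, scal; simpl; unfold mult; simpl; ring. }
  eapply is_derive_ext; [|apply H7].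
  intro t; simpl; unfold minus, plus, opp, scal; simpl; unfold mult; simpl; ring.
Qed.
Lemma mvt f f' a b : a < b -> (forall c, a <= c <= b -> is_derive f c (f' c)) ->
  exists c, a < c < b /\ f b - f a = f' c * (b - a).
Proof.
  intros hab hd. destruct (MVT_cor2 f f' a b hab) as [c [h1 h2]].
  - intros c hc. apply is_derive_Reals. auto.
  - exists c. auto.
Qed.
Lemma strict_conv_lt (P : R -> Prop) f f' :
  (forall x y z, P x -> P y -> x <= z <= y -> P z) ->
  (forall x, P x -> is_derive f x (f' x)) ->
  (forall x y, P x -> P y -> x < y -> f' x < f' y) ->
  forall x y l, P x -> P y -> x < y -> 0 < l < 1 ->
    f (l*x+(1-l)*y) < l * f x + (1-l) * f y.
Proof.
  intros hP hd hm x y l hx hy hxy hl.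
  set (z := l*x+(1-l)*y).
  assert (hz1 : x < z) by (unfold z; nra).
  assert (hz2 : z < y) by (unfold z; nra).
  assert (hPz : P z) by (apply (hP x y); auto; lra).
  destruct (mvt f f' x z hz1) as [c1 [hc1 e1]].
  { intros c hc. apply hd. apply (hP x z); auto. }
  destruct (mvt f f' z y hz2) as [c2 [hc2 e2]].
  { intros c hc. apply hd. apply (hP z y); auto. }
  assert (hlt : f' c1 < f' c2).
  { apply hm; [apply (hP x z) | apply (hP z y) | ]; auto; lra. }
  assert (ez1 : z - x = (1-l)*(y-x)) by (unfold z; ring).
  assert (ez2 : y - z = l*(y-x)) by (unfold z; ring).
  rewrite ez1 in e1. rewrite ez2 in e2.
  assert (0 < l*(1-l)*(y-x)*(f' c2 - f' c1)).
  { apply Rmult_lt_0_compat; [|lra]. apply Rmult_lt_0_compat; [|lra]. nra. }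
  nra.
Qed.
Lemma strict_conv (P : R -> Prop) f f' :
  (forall x y z, P x -> P y -> x <= z <= y -> P z) ->
  (forall x, P x -> is_derive f x (f' x)) ->
  (forall x y, P x -> P y -> x < y -> f' x < f' y) ->
  forall x y l, P x -> P y -> x <> y -> 0 < l < 1 ->
    f (l*x+(1-l)*y) < l * f x + (1-l) * f y.
Proof.
  intros hP hd hm x y l hx hy hxy hl.
  destruct (Rlt_or_le x y) as [h|h].
  - eapply strict_conv_lt; eauto.
  - assert (y < x) by lra.
    replace (l*x+(1-l)*y) with ((1-l)*y+(1-(1-l))*x) by ring.
    replace (l * f x + (1-l) * f y) with ((1-l) * f y + (1-(1-l)) * f x) by ring.
    eapply strict_conv_lt; eauto; lra.
Qed.
Lemma weak_conv (P : R -> Prop) f f' :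
  (forall x y z, P x -> P y -> x <= z <= y -> P z) ->
  (forall x, P x -> is_derive f x (f' x)) ->
  (forall x y, P x -> P y -> x < y -> f' x < f' y) ->
  forall x y l, P x -> P y -> 0 < l < 1 ->
    f (l*x+(1-l)*y) <= l * f x + (1-l) * f y.
Proof.
  intros hP hd hm x y l hx hy hl.
  destruct (Req_dec x y) as [e|e].
  - subst. replace (l*y+(1-l)*y) with y by ring. lra.
  - left. eapply strict_conv; eauto.
Qed.
Lemma decr_on f f' a b : a <= b -> (forall c, a <= c <= b -> is_derive f c (f' c)) ->
  (forall c, a <= c <= b -> f' c <= 0) -> f b <= f a.
Proof.
  intros hab hd hs. destruct hab as [hab|e].
  - destruct (mvt f f' a b hab hd) as [c [hc e]].
    assert (f' c <= 0) by (apply hs; lra). nra.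
  - subst; lra.
Qed.
Lemma incr_on f f' a b : a <= b -> (forall c, a <= c <= b -> is_derive f c (f' c)) ->
  (forall c, a <= c <= b -> 0 <= f' c) -> f a <= f b.
Proof.
  intros hab hd hs. destruct hab as [hab|e].
  - destruct (mvt f f' a b hab hd) as [c [hc e]].
    assert (0 <= f' c) by (apply hs; lra). nra.
  - subst; lra.
Qed.
Definition aa (g : R) : R := 1 - 2 * g.
Definition ts (g : R) : R := aa g / (1 + sqrt (1 - aa g * aa g)).
Definition us (g : R) : R := - ln (ts g).
Definition u0 (g : R) : R := - ln (aa g).

Lemma exp_le_mono x y : x <= y -> exp x <= exp y.
Proof. intros [h|h]; [left; apply exp_increasing; auto | subst; lra]. Qed.

Lemma params g : 0 < g < 1/2 ->
  0 < aa g < 1 /\ 0 < ts g < aa g /\ aa g * (1 + ts g * ts g) = 2 * ts g.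
Proof.
  intro hg. unfold ts. set (a := aa g).
  assert (ha : 0 < a < 1) by (unfold a, aa; lra).
  set (s := sqrt (1 - a*a)).
  assert (hs0 : 0 < s) by (apply sqrt_lt_R0; nra).
  assert (hss : s * s = 1 - a*a) by (apply sqrt_sqrt; nra).
  split; [auto|split;[split|]].
  - apply Rdiv_lt_0_compat; lra.
  - apply Rmult_lt_reg_r with (1+s); [lra|].
    unfold Rdiv. rewrite Rmult_assoc, Rinv_l by lra. nra.
  - apply Rmult_eq_reg_r with ((1+s)*(1+s)); [|nra].
    field_simplify; try lra. replace (s^2) with (1-a*a) by (rewrite <- hss; ring). ring.
Qed.

Lemma exp_us g : 0 < g < 1/2 -> exp (- us g) = ts g.
Proof. intro hg. destruct (params g hg) as [_ [h _]]. unfold us. rewrite Ropp_involutive. apply exp_ln; lra. Qed.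
Lemma exp_u0 g : 0 < g < 1/2 -> exp (- u0 g) = aa g.
Proof. intro hg. destruct (params g hg) as [h _]. unfold u0. rewrite Ropp_involutive. apply exp_ln; lra. Qed.
Lemma u0_lt_us g : 0 < g < 1/2 -> 0 < u0 g < us g.
Proof.
  intro hg. destruct (params g hg) as [h1 [h2 _]]. unfold u0, us. split.
  - rewrite <- ln_1. apply Ropp_lt_cancel. rewrite Ropp_involutive, ln_1, Ropp_0. rewrite <- ln_1. apply ln_increasing; lra.
  - apply Ropp_lt_contravar. apply ln_increasing; lra.
Qed.
Lemma exp_neg_lt1 u : 0 < u -> exp (- u) < 1.
Proof. intro hu. rewrite <- exp_0. apply exp_increasing; lra. Qed.

Lemma dA_incr g u1 u2 : 0 < g < 1/2 -> 0 < u1 -> u1 < u2 -> u2 <= us g ->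
  dA g u1 < dA g u2.
Proof.
  intros hg h1 h12 h2. destruct (params g hg) as [ha [hts ea]].
  pose proof ln2_pos as hL.
  assert (ht2s : ts g <= exp (- u2)) by (rewrite <- exp_us by auto; apply exp_le_mono; lra).
  assert (ht21 : exp (- u2) < exp (- u1)) by (apply exp_increasing; lra).
  assert (ht1 : exp (- u1) < 1) by (apply exp_neg_lt1; lra).
  unfold dA. set (t1 := exp (- u1)) in *. set (t2 := exp (- u2)) in *.
  set (a := aa g) in *. set (s := ts g) in *.
  assert (hg2 : 2 * g = 1 - a) by (unfold a, aa; ring).
  apply Rmult_lt_compat_r; [apply Rinv_0_lt_compat; lra|].
  assert (key : 0 < (t1+t2) - a*(1+t1*t2)).
  { assert (0 < (t1+t2)*(1+s*s) - 2*s*(1+t1*t2)).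
    { replace ((t1+t2)*(1+s*s) - 2*s*(1+t1*t2)) with
        ((t1-s)*(1-s*t2) + (t2-s)*(1-s*t1)) by ring.
      assert (0 < 1 - s*t2) by nra. assert (0 < 1 - s*t1) by nra.
      assert (0 < (t1-s)*(1-s*t2)) by (apply Rmult_lt_0_compat; lra).
      assert (0 <= (t2-s)*(1-s*t1)) by (apply Rmult_le_pos; lra). lra. }
    rewrite <- ea in H. nra. }
  assert (e : (t2/(1+t2) - 2*g*t2/(1-t2*t2)) - (t1/(1+t1) - 2*g*t1/(1-t1*t1))
     = (t1-t2)*((t1+t2) - a*(1+t1*t2)) / ((1-t1*t1)*(1-t2*t2))).
  { rewrite hg2. field. split; nra. }
  assert (0 < (t1-t2)*((t1+t2) - a*(1+t1*t2)) / ((1-t1*t1)*(1-t2*t2))).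
  { apply Rdiv_lt_0_compat; [nra|]. apply Rmult_lt_0_compat; nra. }
  lra.
Qed.

Lemma dG_neg m g u : 0 < g < 1/2 -> 0 < m -> 0 < u -> u <= u0 g -> dG m g u < 0.
Proof.
  intros hg hm h1 h2. destruct (params g hg) as [ha [hts ea]].
  pose proof ln2_pos as hL.
  assert (hta : aa g <= exp (- u)) by (rewrite <- exp_u0 by auto; apply exp_le_mono; lra).
  assert (ht1 : exp (- u) < 1) by (apply exp_neg_lt1; lra).
  pose proof (exp_pos (- (m*u))) as he.
  unfold dG, dA, dB. set (t := exp (- u)) in *. set (e := exp (- (m*u))) in *.
  set (a := aa g) in *.
  assert (hg2 : 2 * g = 1 - a) by (unfold a, aa; ring).
  assert (t / (1 + t) - 2 * g * t / (1 - t * t) = t*(a-t)/(1-t*t)) by (rewrite hg2; field; split; nra).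
  rewrite H.
  assert (t*(a-t)/(1-t*t) <= 0).
  { unfold Rdiv. apply Rmult_le_0_r; [nra|]. left; apply Rinv_0_lt_compat; nra. }
  assert (0 < e/(1+e)) by (apply Rdiv_lt_0_compat; lra).
  assert (m * (t * (a - t) / (1 - t * t) / ln 2) <= 0).
  { unfold Rdiv at 2. apply Rmult_le_0_l; [lra|]. apply Rmult_le_0_r; [lra|]. left; apply Rinv_0_lt_compat; lra. }
  assert (0 < m * (e/(1+e) / ln 2)).
  { apply Rmult_lt_0_compat; [lra|]. apply Rdiv_lt_0_compat; lra. }
  unfold Rdiv in *. lra.
Qed.
Lemma dG_pos m g u : 0 < g < 1/2 -> 2 <= m -> us g <= u -> 0 <= dG m g u.
Proof.
  intros hg hm h2. destruct (params g hg) as [ha [hts ea]].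
  pose proof (u0_lt_us g hg) as hu.
  pose proof ln2_pos as hL.
  assert (hta : exp (- u) <= ts g) by (rewrite <- exp_us by auto; apply exp_le_mono; lra).
  assert (ht1 : exp (- u) < 1) by (apply exp_neg_lt1; lra).
  pose proof (exp_pos (- u)) as ht0.
  pose proof (exp_pos (- (m*u))) as he.
  assert (het : exp (- (m*u)) <= exp (-u) * exp (-u)).
  { rewrite <- exp_plus. apply exp_le_mono. nra. }
  unfold dG, dA, dB. set (t := exp (- u)) in *. set (e := exp (- (m*u))) in *.
  set (a := aa g) in *. set (s := ts g) in *.
  assert (hg2 : 2 * g = 1 - a) by (unfold a, aa; ring).
  assert (t / (1 + t) - 2 * g * t / (1 - t * t) = t*(a-t)/(1-t*t)) by (rewrite hg2; field; split; nra).
  rewrite H.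
  assert (q : 0 <= a*(1+t*t) - 2*t).
  { assert (a*(1+t*t) - 2*t = a*(s-t)*(1-s*t)/s).
    { field_simplify; [|lra]. apply Rmult_eq_reg_r with s; [|lra]. field_simplify; [|lra].
      replace (2*t*s) with (t*(2*s)) by ring. rewrite <- ea. ring. }
    rewrite H0. apply Rmult_le_pos; [|left; apply Rinv_0_lt_compat; lra].
    apply Rmult_le_pos; [|nra]. apply Rmult_le_pos; lra. }
  assert (e/(1+e) <= t*t/(1+t*t)).
  { apply Rmult_le_reg_r with ((1+e)*(1+t*t)); [nra|]. field_simplify; try nra. }
  assert (t*t/(1+t*t) <= t*(a-t)/(1-t*t)).
  { assert (t*t < 1) by nra. assert (0 <= t*t) by nra.
    assert (t*(a-t)/(1-t*t) - t*t/(1+t*t) = t*(a*(1+t*t)-2*t)/((1-t*t)*(1+t*t))) by (field; repeat split; lra).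
    assert (0 <= t*(a*(1+t*t)-2*t)/((1-t*t)*(1+t*t))).
    { apply Rmult_le_pos; [apply Rmult_le_pos; lra|]. left; apply Rinv_0_lt_compat; nra. }
    lra. }
  assert (0 <= t*(a-t)/(1-t*t) - e/(1+e)) by lra.
  replace (m * (t * (a - t) / (1 - t * t) / ln 2) + m * (- (e / (1 + e)) / ln 2))
    with (m / ln 2 * (t*(a-t)/(1-t*t) - e/(1+e))) by (field; repeat split; nra).
  apply Rmult_le_pos; [|lra]. apply Rdiv_le_0_compat; lra.
Qed.
Require Import Defs.

Definition Xof (u : R) : R := (1 - exp (- u)) / (1 + exp (- u)).

Lemma Xof_range u : 0 < u -> 0 < Xof u < 1.
Proof.
  intro hu. pose proof (exp_neg_lt1 u hu). pose proof (exp_pos (-u)). unfold Xof.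
  split; [apply Rdiv_lt_0_compat; lra|].
  apply Rmult_lt_reg_r with (1 + exp (-u)); [lra|]. field_simplify; lra.
Qed.

Lemma Fobj_G m g u : 0 < u -> Fobj m g (Xof u) = Gf m g u.
Proof.
  intro hu. pose proof (exp_neg_lt1 u hu) as h1. pose proof (exp_pos (-u)) as h0.
  pose proof ln2_pos as hL.
  unfold Fobj, Gf, Af, Bf, log2, Rpower, Xof. set (t := exp (-u)) in *.
  assert (e1 : 1 + (1 - t) / (1 + t) = 2 / (1 + t)) by (field; lra).
  assert (e2 : 1 - (1 - t) / (1 + t) = 2 * t / (1 + t)) by (field; lra).
  rewrite e1, e2.
  rewrite (ln_div 2 (1+t)) by lra.
  rewrite (ln_div (2*t) (1+t)) by lra.
  rewrite (ln_div (1-t) (1+t)) by lra.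
  rewrite ln_mult by lra.
  assert (lt : ln t = - u) by (unfold t; apply ln_exp).
  rewrite lt.
  replace (m * (ln 2 + - u - ln (1 + t))) with (m * (ln 2 - ln (1+t)) + - (m*u)) by ring.
  rewrite exp_plus.
  replace (exp (m * (ln 2 - ln (1 + t))) + exp (m * (ln 2 - ln (1 + t))) * exp (- (m * u)))
    with (exp (m * (ln 2 - ln (1 + t))) * (1 + exp (- (m * u)))) by ring.
  pose proof (exp_pos (- (m*u))).
  rewrite ln_mult by (try apply exp_pos; lra).
  rewrite ln_exp. field. lra.
Qed.

Lemma Xof_onto x : 0 < x < 1 -> exists u, 0 < u /\ Xof u = x.
Proof.
  intro hx. exists (ln ((1+x)/(1-x))). split.
  - rewrite <- ln_1. apply ln_increasing; [lra|].
    apply Rmult_lt_reg_r with (1-x); [lra|]. field_simplify; lra.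
  - unfold Xof. rewrite exp_Ropp, exp_ln.
    + field. split; lra.
    + apply Rdiv_lt_0_compat; lra.
Qed.

Lemma min_exists m g : 0 < g < 1/2 -> 2 <= m ->
  exists um, u0 g <= um <= us g /\ forall u, 0 < u -> Gf m g um <= Gf m g u.
Proof.
  intros hg hm. pose proof (u0_lt_us g hg) as hu.
  destruct (continuity_ab_min (Gf m g) (u0 g) (us g)) as [um [hmin hr]].
  - lra.
  - intros c hc. apply derivable_continuous_pt.
    exists (dG m g c). apply is_derive_Reals. apply dG_ok. lra.
  - exists um. split; auto. intros u hu'.
    destruct (Rlt_or_le u (u0 g)) as [h1|h1].
    + assert (Gf m g (u0 g) <= Gf m g u).
      { apply (decr_on _ (dG m g)); [lra| |].
        - intros c hc. apply dG_ok. lra.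
        - intros c hc. left. apply dG_neg; lra. }
      assert (Gf m g um <= Gf m g (u0 g)) by (apply hmin; lra). lra.
    + destruct (Rle_or_lt u (us g)) as [h2|h2].
      * apply hmin; lra.
      * assert (Gf m g (us g) <= Gf m g u).
        { apply (incr_on _ (dG m g)); [lra| |].
          - intros c hc. apply dG_ok. lra.
          - intros c hc. apply dG_pos; lra. }
        assert (Gf m g um <= Gf m g (us g)) by (apply hmin; lra). lra.
Qed.

Lemma F_char m g : 0 < g < 1/2 -> 2 <= m ->
  exists um, u0 g <= um <= us g /\ F m g = Gf m g um /\ is_min_value m g (F m g).
Proof.
  intros hg hm. pose proof (u0_lt_us g hg) as hu.
  destruct (min_exists m g hg hm) as [um [hr hmin]].
  assert (hv : is_min_value m g (Gf m g um)).
  { split.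
    - exists (Xof um). split; [apply Xof_range; lra|]. apply Fobj_G; lra.
    - intros x hx. destruct (Xof_onto x hx) as [u [hu0 <-]]. rewrite Fobj_G by lra. auto. }
  assert (hF : is_min_value m g (F m g)).
  { unfold F. apply epsilon_spec. eauto. }
  exists um. split; auto. split; auto.
  destruct hF as [[x [hx ex]] hF]. destruct hv as [[y [hy ey]] hv].
  assert (F m g <= Gf m g um) by (rewrite <- ey; apply hF; auto).
  assert (Gf m g um <= F m g) by (rewrite <- ex; apply hv; auto). lra.
Qed.

Lemma dB_incr x y : x < y -> dB x < dB y.
Proof.
  intro h. pose proof ln2_pos. unfold dB.
  assert (exp (-y) < exp (-x)) by (apply exp_increasing; lra).
  pose proof (exp_pos (-y)). pose proof (exp_pos (-x)).
  assert (exp (-y) / (1 + exp (-y)) < exp (-x) / (1 + exp (-x))).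
  { apply Rmult_lt_reg_r with ((1 + exp (-y))*(1+exp (-x))); [nra|]. field_simplify; lra. }
  unfold Rdiv at 1 3. apply Rmult_lt_compat_r; [apply Rinv_0_lt_compat; lra|]. lra.
Qed.

Lemma A_conv g : 0 < g < 1/2 -> forall x y l, 0 < x <= us g -> 0 < y <= us g -> 0 < l < 1 ->
  Af g (l*x+(1-l)*y) <= l * Af g x + (1-l) * Af g y /\
  (x <> y -> Af g (l*x+(1-l)*y) < l * Af g x + (1-l) * Af g y).
Proof.
  intros hg x y l hx hy hl.
  assert (hP : forall x y z, 0 < x <= us g -> 0 < y <= us g -> x <= z <= y -> 0 < z <= us g) by (intros; lra).
  assert (hd : forall x, 0 < x <= us g -> is_derive (Af g) x (dA g x)) by (intros; apply dA_ok; lra).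
  assert (hm : forall x y, 0 < x <= us g -> 0 < y <= us g -> x < y -> dA g x < dA g y) by (intros; apply dA_incr; lra).
  split.
  - eapply (weak_conv (fun u => 0 < u <= us g)); eauto.
  - intro hne. eapply (strict_conv (fun u => 0 < u <= us g)); eauto.
Qed.

Lemma B_conv : forall x y l, 0 < l < 1 ->
  Bf (l*x+(1-l)*y) <= l * Bf x + (1-l) * Bf y /\
  (x <> y -> Bf (l*x+(1-l)*y) < l * Bf x + (1-l) * Bf y).
Proof.
  intros x y l hl.
  assert (hP : forall x y z : R, True -> True -> x <= z <= y -> True) by auto.
  assert (hd : forall x, True -> is_derive Bf x (dB x)) by (intros; apply dB_ok).
  assert (hm : forall x y, True -> True -> x < y -> dB x < dB y) by (intros; apply dB_incr; lra).
  split.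
  - eapply (weak_conv (fun _ => True)); eauto.
  - intro hne. eapply (strict_conv (fun _ => True)); eauto.
Qed.

Theorem mainTheorem16 : forall g : R, 0 < g < 1/2 ->
  strictly_convex_on (fun m => 2 <= m) (fun m => F m g).
Proof.
  intros g hg m1 m2 l h1 h2 hne hl. cbv beta.
  pose proof (u0_lt_us g hg) as hu.
  destruct (F_char m1 g hg h1) as [u1 [hu1 [e1 _]]].
  destruct (F_char m2 g hg h2) as [u2 [hu2 [e2 _]]].
  set (M := l*m1 + (1-l)*m2).
  assert (hM : 2 <= M) by (unfold M; nra).
  destruct (F_char M g hg hM) as [_ [_ [_ [_ hFM]]]].
  set (mu := l*m1/M).
  assert (hmu : 0 < mu < 1).
  { unfold mu. split; [apply Rdiv_lt_0_compat; nra|].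
    apply Rmult_lt_reg_r with M; [lra|]. field_simplify; unfold M; nra. }
  set (U := mu*u1 + (1-mu)*u2).
  assert (hU : 0 < U <= us g) by (unfold U; nra).
  assert (eM1 : M * mu = l*m1) by (unfold mu; field; lra).
  assert (eM2 : M * (1-mu) = (1-l)*m2) by (replace (M*(1-mu)) with (M - M*mu) by ring; rewrite eM1; unfold M; ring).
  assert (eMU : M * U = l*(m1*u1) + (1-l)*(m2*u2)).
  { unfold U. rewrite Rmult_plus_distr_l, <- Rmult_assoc, eM1, <- Rmult_assoc, eM2; ring. }
  assert (hF : F M g <= Gf M g U).
  { rewrite <- Fobj_G by lra. apply hFM. apply Xof_range. lra. }
  destruct (A_conv g hg u1 u2 mu ltac:(lra) ltac:(lra) hmu) as [hA1 hA2].
  destruct (B_conv (m1*u1) (m2*u2) l hl) as [hB1 hB2].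
  rewrite e1, e2. unfold Gf in *. rewrite eMU in hF.
  assert (hMA : M * Af g U <= l*m1 * Af g u1 + (1-l)*m2 * Af g u2).
  { rewrite <- eM1, <- eM2. fold U in hA1. nra. }
  destruct (Req_dec u1 u2) as [eu|neu].
  - assert (m1*u1 <> m2*u2).
    { rewrite <- eu. intro h. apply hne. apply Rmult_eq_reg_r with u1; lra. }
    specialize (hB2 H). fold M. nra.
  - specialize (hA2 neu). fold U in hA2.
    assert (M * Af g U < l*m1 * Af g u1 + (1-l)*m2 * Af g u2).
    { rewrite <- eM1, <- eM2. nra. }
    fold M. nra.
Qed.
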